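(* Let $m_1 \leq n_1$, $m_2 \leq n_2$, $m_3 \leq n_3$ be natural numbers. Then the minimal typical subrank of real $n_1\times n_2\times n_3$ tensors is at least the minimal typical subrank of real $m_1 \times m_2 \times m_3$ tensors.
   Context: For $r \geq 0$ let $I_r := \sum_{j=1}^r e_j \otimes e_j \otimes e_j$. The subrank of $T \in \mathbb{R}^{n_1} \otimes \mathbb{R}^{n_2} \otimes \mathbb{R}^{n_3}$ is $Q(T) := \max\{ r \mid \exists\ \mathbb{R}\text{-linear } \varphi_i : \mathbb{R}^{n_i} \to \mathbb{R}^r,\ (\varphi_1 \otimes \varphi_2 \otimes \varphi_3) T = I_r\}$. An integer $r$ is a typical subrank of the format $n_1\times n_2\times n_3$ if $\{T \mid Q(T) = r\}$ contains a nonempty Euclidean-open subset of $\mathbb{R}^{n_1} \otimes \mathbb{R}^{n_2} \otimes \mathbb{R}^{n_3}$. *)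

(* Defs.v *)
From HB Require Import structures.
From mathcomp Require Import all_boot all_order all_algebra.
From mathcomp Require Import reals.
Set Implicit Arguments. Unset Strict Implicit. Unset Printing Implicit Defensive.
Import Order.TTheory GRing.Theory Num.Theory.
Local Open Scope ring_scope.

(* Real tensors in R^{n1} (x) R^{n2} (x) R^{n3}, as coordinate arrays
   w.r.t. the standard basis e_i (x) e_j (x) e_k. *)
Definition tensor (R : realType) (n1 n2 n3 : nat) :=
  'I_n1 -> 'I_n2 -> 'I_n3 -> R.

(* (phi1 (x) phi2 (x) phi3) T, for linear maps phi_i : R^{n_i} -> R^r given
   by their r x n_i matrices. *)
Definition tensor_apply (R : realType) (n1 n2 n3 r : nat)
  (A : 'M[R]_(r, n1)) (B : 'M[R]_(r, n2)) (C : 'M[R]_(r, n3))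
  (T : tensor R n1 n2 n3) : tensor R r r r :=
  fun a b c => \sum_(i < n1) \sum_(j < n2) \sum_(k < n3)
                 A a i * B b j * C c k * T i j k.

Definition unit_tensor (R : realType) (r : nat) : tensor R r r r :=
  fun a b c => if (a == b) && (b == c) then 1 else 0.

Definition restricts_to_unit (R : realType) (n1 n2 n3 : nat)
  (T : tensor R n1 n2 n3) (r : nat) : Prop :=
  exists (A : 'M[R]_(r, n1)) (B : 'M[R]_(r, n2)) (C : 'M[R]_(r, n3)),
    forall a b c, tensor_apply A B C T a b c = @unit_tensor R r a b c.

Definition subrank_eq (R : realType) (n1 n2 n3 : nat)
  (T : tensor R n1 n2 n3) (r : nat) : Prop :=
  @restricts_to_unit R n1 n2 n3 T r /\ (forall r', @restricts_to_unit R n1 n2 n3 T r' -> (r' <= r)%N).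

(* Euclidean-open subsets of the tensor space (using the max-norm on
   coordinates, which induces the Euclidean topology). *)
Definition tensor_open (R : realType) (n1 n2 n3 : nat)
  (U : tensor R n1 n2 n3 -> Prop) : Prop :=
  forall T, U T -> exists e : R, 0 < e /\
    forall T' : tensor R n1 n2 n3,
      (forall i j k, `|T' i j k - T i j k| < e) -> U T'.

Definition typical_subrank (R : realType) (n1 n2 n3 r : nat) : Prop :=
  exists U : tensor R n1 n2 n3 -> Prop,
    [/\ tensor_open U, (exists T, U T) & forall T, U T -> @subrank_eq R n1 n2 n3 T r].

Definition min_typical_subrank (R : realType) (n1 n2 n3 r : nat) : Prop :=
  typical_subrank R n1 n2 n3 r /\
  (forall r', typical_subrank R n1 n2 n3 r' -> (r <= r')%N).

(* Main.v *)
From HB Require Import structures.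
From mathcomp Require Import all_boot all_order all_algebra.
From mathcomp Require Import reals.
From mathcomp Require Import ordered_qelim qe_rcf.
From mathcomp Require Import ring lra.
From Stdlib Require Import Classical.
Require Import Defs.
Set Implicit Arguments. Unset Strict Implicit. Unset Printing Implicit Defensive.
Import Order.TTheory GRing.Theory Num.Theory.
Local Open Scope ring_scope.

Section Topo.
Variables (R : realType) (n1 n2 n3 : nat).
Local Notation tens := (tensor R n1 n2 n3).

Definition nbhd (T0 : tens) (d : R) (T : tens) :=
  forall i j k, `|T i j k - T0 i j k| < d.

Definition cont (f : tens -> R) := forall T0 e, 0 < e ->
  exists d, 0 < d /\ forall T, nbhd T0 d T -> `|f T - f T0| < e.

Definition decidesb (W : tens -> Prop) (p : tens -> bool) :=
  exists b, forall T, W T -> p T = b.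

Definition tameb (p : tens -> bool) := forall W, tensor_open W -> (exists T, W T) ->
  exists W', [/\ tensor_open W', (exists T, W' T), (forall T, W' T -> W T) & decidesb W' p].

Lemma nbhd_min T0 d1 d2 T : nbhd T0 (Num.min d1 d2) T -> nbhd T0 d1 T /\ nbhd T0 d2 T.
Proof.
move=> h; split=> i j k; have := h i j k; rewrite lt_min => /andP[] //.
Qed.

Lemma cont_ext f g : cont f -> (forall T, f T = g T) -> cont g.
Proof.
move=> cf fg T0 e e0; have [d [d0 hd]] := cf T0 e e0; exists d; split => // T.
by rewrite -!fg; apply: hd.
Qed.

Lemma cont_const c : cont (fun _ => c).
Proof. move=> T0 e e0; exists 1; split => // T _; by rewrite subrr normr0. Qed.

Lemma cont_add f g : cont f -> cont g -> cont (fun T => f T + g T).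
Proof.
move=> cf cg T0 e e0.
have e2 : 0 < e / 2 by rewrite divr_gt0.
have [d1 [d10 h1]] := cf T0 _ e2; have [d2 [d20 h2]] := cg T0 _ e2.
exists (Num.min d1 d2); split; first by rewrite lt_min d10 d20.
move=> T /nbhd_min [/h1 a /h2 b].
have -> : f T + g T - (f T0 + g T0) = (f T - f T0) + (g T - g T0) by ring.
apply: (le_lt_trans (ler_normD _ _)).
have -> : e = e / 2 + e / 2 by field.
by rewrite ltrD.
Qed.

Lemma cont_opp f : cont f -> cont (fun T => - f T).
Proof.
move=> cf T0 e e0; have [d [d0 h]] := cf T0 _ e0; exists d; split => // T /h.
by rewrite -opprD normrN.
Qed.

Lemma cont_mul f g : cont f -> cont g -> cont (fun T => f T * g T).
Proof.
move=> cf cg T0 e e0.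
set F := `|f T0|; set G := `|g T0|.
have F0 : 0 <= F by rewrite normr_ge0.
have G0 : 0 <= G by rewrite normr_ge0.
set c := Num.min 1 (e / (1 + F + G)).
have c0 : 0 < c by rewrite lt_min ltr01 /= divr_gt0 //; lra.
have c1 : c <= 1 by rewrite ge_min lexx.
have ce : c * (1 + F + G) <= e.
  have : c <= e / (1 + F + G) by rewrite ge_min lexx orbT.
  by rewrite ler_pdivlMr //; lra.
have [d1 [d10 h1]] := cf T0 _ c0; have [d2 [d20 h2]] := cg T0 _ c0.
exists (Num.min d1 d2); split; first by rewrite lt_min d10 d20.
move=> T /nbhd_min [/h1 a /h2 b].
have -> : f T * g T - f T0 * g T0 =
   (f T - f T0) * (g T - g T0) + f T0 * (g T - g T0) + g T0 * (f T - f T0) by ring.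
set x := f T - f T0 in a *; set y := g T - g T0 in b *.
apply: (le_lt_trans (ler_normD _ _)).
apply: (le_lt_trans (lerD (ler_normD _ _) (lexx _))).
rewrite !normrM -/F -/G.
have x0 : 0 <= `|x| by rewrite normr_ge0.
have y0 : 0 <= `|y| by rewrite normr_ge0.
apply: (lt_le_trans _ ce).
nra.
Qed.

Lemma cont_norm f : cont f -> cont (fun T => `|f T|).
Proof.
move=> cf T0 e e0; have [d [d0 h]] := cf T0 _ e0; exists d; split => // T /h.
apply: le_lt_trans; exact: ler_dist_dist.
Qed.

Lemma cont_natmul f n : cont f -> cont (fun T => f T *+ n).
Proof.
move=> cf; elim: n => [|n IH]; first exact: (cont_const 0).
by apply: (cont_ext (cont_add cf IH)) => T; rewrite mulrS.
Qed.

Lemma cont_exp f n : cont f -> cont (fun T => f T ^+ n).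
Proof.
move=> cf; elim: n => [|n IH]; first exact: (cont_const 1).
by apply: (cont_ext (cont_mul cf IH)) => T; rewrite exprS.
Qed.


Lemma open_pos W f : tensor_open W -> cont f ->
  tensor_open (fun T => W T /\ 0 < f T).
Proof.
move=> oW cf T [WT fT].
have [e1 [e10 h1]] := oW T WT.
have [d [d0 hd]] := cf T _ fT.
exists (Num.min e1 d); split; first by rewrite lt_min e10 d0.
move=> T' hT'; split.
  apply: h1 => i j k; have := hT' i j k; rewrite lt_min => /andP[] //.
have : `|f T' - f T| < f T.
  apply: hd => i j k; have := hT' i j k; rewrite lt_min => /andP[] //.
rewrite ltr_norml => /andP[a _]; lra.
Qed.

Lemma tameb_pos f : cont f -> tameb (fun T => 0 < f T).
Proof.
move=> cf W oW neW.
case: (classic (exists T, W T /\ 0 < f T)) => [[T0 [WT0 fT0]]|no].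
  exists (fun T => W T /\ 0 < f T); split.
  - exact: open_pos.
  - by exists T0.
  - by move=> T [].
  - by exists true => T [].
exists W; split => //; exists false => T WT; apply/negbTE/negP => fT.
by apply: no; exists T.
Qed.

Lemma tameb_ext p q : tameb p -> (forall T, p T = q T) -> tameb q.
Proof.
move=> tp pq W oW neW; have [W' [o ne sub [b hb]]] := tp W oW neW.
by exists W'; split => //; exists b => T /hb; rewrite pq.
Qed.

Lemma tameb_const b : tameb (fun _ => b).
Proof. by move=> W oW neW; exists W; split => //; exists b. Qed.

Lemma tameb_op1 (op : bool -> bool) p : tameb p -> tameb (fun T => op (p T)).
Proof.
move=> tp W oW neW; have [W' [o ne sub [b hb]]] := tp W oW neW.
by exists W'; split => //; exists (op b) => T /hb ->.
Qed.

Lemma tameb_op2 (op : bool -> bool -> bool) p q : tameb p -> tameb q ->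
  tameb (fun T => op (p T) (q T)).
Proof.
move=> tp tq W oW neW; have [W1 [o1 ne1 sub1 [b1 hb1]]] := tp W oW neW.
have [W2 [o2 ne2 sub2 [b2 hb2]]] := tq W1 o1 ne1.
exists W2; split => //; first by move=> T /sub2 /sub1.
by exists (op b1 b2) => T WT; rewrite hb2 // hb1 //; apply: sub2.
Qed.

Lemma cont_eval (envf : tens -> seq R) :
  (forall n, cont (fun T => nth 0 (envf T) n)) ->
  forall t, GRing.rterm t -> cont (fun T => GRing.eval (envf T) t).
Proof.
move=> hv; elim => //=.
- move=> c _; exact: cont_const.
- move=> n _; exact: cont_const.
- by move=> t1 IH1 t2 IH2 /andP[r1 r2]; apply: cont_add; [apply: IH1|apply: IH2].
- by move=> t1 IH1 r1; apply: cont_opp; apply: IH1.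
- by move=> t1 IH1 n r1; apply: cont_natmul; apply: IH1.
- by move=> t1 IH1 t2 IH2 /andP[r1 r2]; apply: cont_mul; [apply: IH1|apply: IH2].
- by move=> t1 IH1 n r1; apply: cont_exp; apply: IH1.
Qed.

Lemma tameb_qf (envf : tens -> seq R) :
  (forall n, cont (fun T => nth 0 (envf T) n)) ->
  forall g, ord.qf_form g && ord.rformula g ->
  tameb (fun T => ord.qf_eval (envf T) g).
Proof.
move=> hv; elim => //=.
- move=> b _; exact: tameb_const.
- move=> t1 t2 /andP[r1 r2].
  have c := cont_norm (cont_add (cont_eval hv r1) (cont_opp (cont_eval hv r2))).
  apply: (tameb_ext (tameb_op1 negb (tameb_pos c))) => T /=.
  by rewrite normr_gt0 subr_eq0 negbK.
- move=> t1 t2 /andP[r1 r2].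
  have c := cont_add (cont_eval hv r2) (cont_opp (cont_eval hv r1)).
  by apply: (tameb_ext (tameb_pos c)) => T /=; rewrite subr_gt0.
- move=> t1 t2 /andP[r1 r2].
  have c := cont_add (cont_eval hv r1) (cont_opp (cont_eval hv r2)).
  by apply: (tameb_ext (tameb_op1 negb (tameb_pos c))) => T /=; rewrite subr_gt0 -leNgt.
- move=> f1 IH1 f2 IH2 /andP[/andP[q1 q2] /andP[r1 r2]].
  by apply: tameb_op2; [apply: IH1; rewrite q1 | apply: IH2; rewrite q2].
- move=> f1 IH1 f2 IH2 /andP[/andP[q1 q2] /andP[r1 r2]].
  by apply: tameb_op2; [apply: IH1; rewrite q1 | apply: IH2; rewrite q2].
- move=> f1 IH1 f2 IH2 /andP[/andP[q1 q2] /andP[r1 r2]].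
  by apply: tameb_op2; [apply: IH1; rewrite q1 | apply: IH2; rewrite q2].
- by move=> f1 IH1 h; apply: tameb_op1; apply: IH1.
Qed.

End Topo.

Lemma holds_exlist (R : realDomainType) (f : ord.formula R) (vs : seq nat) (e : seq R) :
  ord.holds e (foldr (fun i g => ord.Exists i g) f vs) <->
  exists e', (forall j, j \notin vs -> nth 0 e' j = nth 0 e j) /\ ord.holds e' f.
Proof.
elim: vs e => [|i vs IH] e /=.
  split; first by move=> h; exists e.
  move=> [e' [ag h]]; apply: ord.eq_holds h => j; exact: ag.
split.
  move=> [x /IH [e' [ag h]]]; exists e'; split => // j.
  rewrite in_cons negb_or => /andP[ji jv]; rewrite ag // nth_set_nth /=.
  by rewrite (negbTE ji).
move=> [e' [ag h]]; exists (nth 0 e' i); apply/IH; exists e'; split => // j jv.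
rewrite nth_set_nth /=; case: eqP => [->//|/eqP ji].
by apply: ag; rewrite in_cons negb_or ji.
Qed.

Lemma holds_bigAnd (R : realDomainType) (I : eqType) (s : seq I) (F : I -> ord.formula R) e :
  ord.holds e (\big[ord.And/ord.Bool true]_(x <- s) F x) <->
  forall x, x \in s -> ord.holds e (F x).
Proof.
elim: s => [|y s IH]; first by rewrite big_nil.
rewrite big_cons /=; split.
  move=> [h1 /IH h2] x; rewrite in_cons => /orP[/eqP->//|]; exact: h2.
move=> h; split; first by apply: h; rewrite mem_head.
by apply/IH => x xs; apply: h; rewrite in_cons xs orbT.
Qed.

Section Form.
Variables (R : realType) (m1 m2 m3 r : nat).
Definition V : finType := (((('I_m1 * 'I_m2 * 'I_m3) + ('I_r * 'I_m1)) + ('I_r * 'I_m2)) + ('I_r * 'I_m3))%type.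
Definition vr (v : V) : nat := enum_rank v.
Definition isX (v : V) : bool := if v is inl (inl (inl _)) then true else false.
Definition xS i j k := vr (inl (inl (inl (i, j, k)))).
Definition xA a i := vr (inl (inl (inr (a, i)))).
Definition xB b j := vr (inl (inr (b, j))).
Definition xC c k := vr (inr (c, k)).

Definition tterm (a b c : 'I_r) : GRing.term R :=
  \big[GRing.Add/GRing.Const 0]_(i < m1) \big[GRing.Add/GRing.Const 0]_(j < m2)
   \big[GRing.Add/GRing.Const 0]_(k < m3)
    GRing.Mul (GRing.Mul (GRing.Mul (GRing.Var _ (xA a i)) (GRing.Var _ (xB b j)))
       (GRing.Var _ (xC c k))) (GRing.Var _ (xS i j k)).

Definition I3 : finType := ('I_r * 'I_r * 'I_r)%type.
Definition body : ord.formula R :=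
  \big[ord.And/ord.Bool true]_(t <- enum I3)
    ord.Equal (tterm t.1.1 t.1.2 t.2) (GRing.Const (@unit_tensor R r t.1.1 t.1.2 t.2)).

Definition vs := [seq vr v | v <- enum V & ~~ isX v].
Definition Fr := foldr (fun i g => ord.Exists i g) body vs.

Definition envf (g : V -> R) : seq R := [seq g v | v <- enum V].
Definition gS (S : tensor R m1 m2 m3) (v : V) : R :=
  if v is inl (inl (inl (i, j, k))) then S i j k else 0.
Definition envS S := envf (gS S).

Lemma nth_envf g v : nth 0 (envf g) (vr v) = g v.
Proof. by rewrite /envf (nth_map v) ?nth_enum_rank // -cardE ltn_ord. Qed.

Lemma nth_envf_large g j : (#|V| <= j)%N -> nth 0 (envf g) j = 0.
Proof. by move=> h; rewrite nth_default // size_map -cardE. Qed.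

Lemma vr_vs v : (vr v \in vs) = ~~ isX v.
Proof.
apply/mapP/idP => [[w]|h]; last by exists v => //; rewrite mem_filter h mem_enum.
by rewrite mem_filter => /andP[h _] /ord_inj/enum_rank_inj ->.
Qed.

Lemma eval_tterm e a b c : GRing.eval e (tterm a b c) =
  \sum_(i < m1) \sum_(j < m2) \sum_(k < m3)
    nth 0 e (xA a i) * nth 0 e (xB b j) * nth 0 e (xC c k) * nth 0 e (xS i j k).
Proof.
rewrite /tterm (big_morph (GRing.eval e) (id1 := 0) (op1 := +%R)) //.
apply: eq_bigr => i _; rewrite (big_morph (GRing.eval e) (id1 := 0) (op1 := +%R)) //.
apply: eq_bigr => j _; rewrite (big_morph (GRing.eval e) (id1 := 0) (op1 := +%R)) //.
Qed.

Lemma Fr_spec S : ord.holds (envS S) Fr <-> restricts_to_unit S r.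
Proof.
rewrite /Fr holds_exlist; split.
  move=> [e' [ag hb]].
  exists (\matrix_(a, i) nth 0 e' (xA a i)), (\matrix_(b, j) nth 0 e' (xB b j)),
         (\matrix_(c, k) nth 0 e' (xC c k)) => a b c.
  move/holds_bigAnd: hb => /(_ (a, b, c)); rewrite mem_enum => /(_ isT) /=.
  rewrite eval_tterm => <-; rewrite /tensor_apply.
  apply: eq_bigr => i _; apply: eq_bigr => j _; apply: eq_bigr => k _.
  by rewrite !mxE [e'`_(xS i j k)]ag ?vr_vs // /envS nth_envf.
move=> [A [B [C h]]].
pose g (v : V) : R := match v with
  | inl (inl (inl (i, j, k))) => S i j k
  | inl (inl (inr (a, i))) => A a i
  | inl (inr (b, j)) => B b j
  | inr (c, k) => C c k end.
exists (envf g); split.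
  move=> j; case: (ltnP j #|V|) => [hj|hj]; last by rewrite !nth_envf_large.
  have -> : j = vr (enum_val (Ordinal hj)) by rewrite /vr enum_valK.
  rewrite vr_vs !nth_envf; case: (enum_val _) => [[[[[i j'] k]|[a i]]|[b j']]|[c k]] //=.
apply/holds_bigAnd => [[[a b] c]] _ /=.
rewrite eval_tterm -h /tensor_apply.
apply: eq_bigr => i _; apply: eq_bigr => j _; apply: eq_bigr => k _.
by rewrite !nth_envf.
Qed.

End Form.

Definition Pr (R : realType) m1 m2 m3 r (S : tensor R m1 m2 m3) : bool :=
  rcf_sat (envS r S) (Fr R m1 m2 m3 r).

Lemma Pr_spec (R : realType) m1 m2 m3 r (S : tensor R m1 m2 m3) :
  Pr r S <-> restricts_to_unit S r.
Proof. by rewrite -Fr_spec; split => /rcf_satP. Qed.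

Lemma cont_coord (R : realType) m1 m2 m3 i j k :
  cont (fun S : tensor R m1 m2 m3 => S i j k).
Proof. by move=> T0 e e0; exists e; split => // T; apply. Qed.

Lemma tame_Pr (R : realType) m1 m2 m3 r : tameb (@Pr R m1 m2 m3 r).
Proof.
rewrite /Pr /rcf_sat /ord.proj_sat.
apply: tameb_qf; last first.
  exact: (ord.quantifier_elim_wf (@wf_QE_wproj R) (ord.to_rform_rformula _)).
move=> n; case: (ltnP n #|V m1 m2 m3 r|) => [hn|hn]; last first.
  apply: (@cont_ext _ _ _ _ (fun _ => 0)); first exact: cont_const.
  by move=> T; rewrite /envS nth_envf_large.
have -> : n = vr (enum_val (Ordinal hn)) by rewrite /vr enum_valK.
apply: (@cont_ext _ _ _ _ (fun S => gS S (enum_val (Ordinal hn)))); last first.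
  by move=> T; rewrite /envS nth_envf.
case: (enum_val _) => [[[[[i j] k]|[a i]]|[b j]]|[c k]] /=;
  try exact: cont_const; exact: cont_coord.
Qed.

Lemma exists_max (P : nat -> Prop) n : P 0%N ->
  exists k, [/\ (k <= n)%N, P k & forall j, (j <= n)%N -> P j -> (j <= k)%N].
Proof.
move=> P0; elim: n => [|n [k [kn Pk hk]]].
  by exists 0%N; split.
case: (classic (P n.+1)) => [Pn|nPn].
  by exists n.+1; split.
exists k; split => //; first exact: leqW.
move=> j; rewrite leq_eqVlt => /orP[/eqP->//|jn Pj]; exact: hk.
Qed.

Lemma tame_many (R : realType) n1 n2 n3 (P : nat -> tensor R n1 n2 n3 -> bool) :
  (forall r, tameb (P r)) -> forall n W, tensor_open W -> (exists T, W T) ->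
  exists W', [/\ tensor_open W', (exists T, W' T), (forall T, W' T -> W T) &
     forall r, (r < n)%N -> decidesb W' (P r)].
Proof.
move=> tP; elim => [|n IH] W oW neW.
  by exists W; split.
have [W1 [o1 ne1 s1 d1]] := IH W oW neW.
have [W2 [o2 ne2 s2 [b hb]]] := tP n W1 o1 ne1.
exists W2; split => //; first by move=> T /s2 /s1.
move=> r; rewrite ltnS leq_eqVlt => /orP[/eqP->|rn]; first by exists b.
have [b' hb'] := d1 r rn; exists b' => T /s2; exact: hb'.
Qed.

Lemma restricts0 (R : realType) n1 n2 n3 (T : tensor R n1 n2 n3) : restricts_to_unit T 0.
Proof. by exists 0, 0, 0 => [[]]. Qed.

Lemma sum_widen (R : realType) n m (h : (m <= n)%N) (F : 'I_n -> R) :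
  (forall i : 'I_n, (m <= i)%N -> F i = 0) ->
  \sum_(i < n) F i = \sum_(i < m) F (widen_ord h i).
Proof.
move=> hF; rewrite -(big_ord_narrow h) [RHS]big_mkcond /=. apply: eq_bigr => i _.
by case: ltnP => // /hF.
Qed.

Definition ext_mx (R : realType) r m n (A : 'M[R]_(r, m)) : 'M[R]_(r, n) :=
  \matrix_(a, i) oapp (A a) 0 (insub (nat_of_ord i) : option 'I_m).

Lemma ext_mx_widen (R : realType) r m n (h : (m <= n)%N) (A : 'M[R]_(r, m)) a i :
  ext_mx n A a (widen_ord h i) = A a i.
Proof. by rewrite /ext_mx mxE /= valK. Qed.

Lemma ext_mx_large (R : realType) r m n (A : 'M[R]_(r, m)) a (i : 'I_n) :
  (m <= i)%N -> ext_mx n A a i = 0.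
Proof. by move=> h; rewrite /ext_mx mxE insubN // -leqNgt. Qed.

Lemma restr_proj (R : realType) m1 m2 m3 n1 n2 n3 (h1 : (m1 <= n1)%N)
  (h2 : (m2 <= n2)%N) (h3 : (m3 <= n3)%N) (T : tensor R n1 n2 n3)
  (S : tensor R m1 m2 m3) r :
  (forall i j k, T (widen_ord h1 i) (widen_ord h2 j) (widen_ord h3 k) = S i j k) ->
  restricts_to_unit S r -> restricts_to_unit T r.
Proof.
move=> hTS [A [B [C hABC]]].
exists (ext_mx n1 A), (ext_mx n2 B), (ext_mx n3 C) => a b c.
rewrite -hABC /tensor_apply.
rewrite (sum_widen h1); last first.
  move=> i hi; apply: big1 => j _; apply: big1 => k _.
  by rewrite ext_mx_large // !mul0r.
apply: eq_bigr => i _; rewrite (sum_widen h2); last first.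
  move=> j hj; apply: big1 => k _.
  by rewrite [ext_mx n2 B b j]ext_mx_large // mulr0 !mul0r.
apply: eq_bigr => j _; rewrite (sum_widen h3); last first.
  move=> k hk; by rewrite [ext_mx n3 C c k]ext_mx_large // mulr0 mul0r.
apply: eq_bigr => k _.
by rewrite !ext_mx_widen hTS.
Qed.

Definition ext_t (R : realType) m1 m2 m3 n1 n2 n3 (T : tensor R n1 n2 n3)
  (S : tensor R m1 m2 m3) : tensor R n1 n2 n3 := fun i j k =>
  match (insub (nat_of_ord i) : option 'I_m1), (insub (nat_of_ord j) : option 'I_m2),
        (insub (nat_of_ord k) : option 'I_m3) with
  | Some i', Some j', Some k' => S i' j' k'
  | _, _, _ => T i j k end.

Lemma ext_t_widen (R : realType) m1 m2 m3 n1 n2 n3 (h1 : (m1 <= n1)%N)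
  (h2 : (m2 <= n2)%N) (h3 : (m3 <= n3)%N) (T : tensor R n1 n2 n3)
  (S : tensor R m1 m2 m3) i j k :
  ext_t T S (widen_ord h1 i) (widen_ord h2 j) (widen_ord h3 k) = S i j k.
Proof. by rewrite /ext_t /= !valK. Qed.

Lemma ext_t_near (R : realType) m1 m2 m3 n1 n2 n3 (h1 : (m1 <= n1)%N)
  (h2 : (m2 <= n2)%N) (h3 : (m3 <= n3)%N) (T : tensor R n1 n2 n3)
  (S0 S : tensor R m1 m2 m3) e :
  (forall i j k, T (widen_ord h1 i) (widen_ord h2 j) (widen_ord h3 k) = S0 i j k) ->
  0 < e -> nbhd S0 e S -> nbhd T e (ext_t T S).
Proof.
move=> hTS e0 hS i j k; rewrite /ext_t.
case: insubP => [i' _ vi|_]; last by rewrite subrr normr0.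
case: insubP => [j' _ vj|_]; last by rewrite subrr normr0.
case: insubP => [k' _ vk|_]; last by rewrite subrr normr0.
have -> : i = widen_ord h1 i' by apply: val_inj.
have -> : j = widen_ord h2 j' by apply: val_inj.
have -> : k = widen_ord h3 k' by apply: val_inj.
by rewrite hTS.
Qed.

Theorem lemma4p1 (R : realType) (m1 m2 m3 n1 n2 n3 : nat) :
  (m1 <= n1)%N -> (m2 <= n2)%N -> (m3 <= n3)%N ->
  forall rm rn : nat,
    min_typical_subrank R m1 m2 m3 rm ->
    min_typical_subrank R n1 n2 n3 rn ->
    (rm <= rn)%N.
Proof.
move=> h1 h2 h3 rm rn [_ minm] [[Un [oUn [T0 UT0] hUn]] _].
pose proj (T : tensor R n1 n2 n3) (S : tensor R m1 m2 m3) :=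
  forall i j k, T (widen_ord h1 i) (widen_ord h2 j) (widen_ord h3 k) = S i j k.
pose B (S : tensor R m1 m2 m3) := exists T, Un T /\ proj T S.
have oB : tensor_open B.
  move=> S [T [UT pTS]]; have [e [e0 he]] := oUn T UT.
  exists e; split => // S' hS'; exists (ext_t T S'); split.
    by apply: he; apply: (ext_t_near pTS).
  by move=> i j k; rewrite ext_t_widen.
have neB : exists S, B S.
  by exists (fun i j k => T0 (widen_ord h1 i) (widen_ord h2 j) (widen_ord h3 k)), T0.
have HB : forall S, B S -> forall r', restricts_to_unit S r' -> (r' <= rn)%N.
  move=> S [T [UT pTS]] r' hr; have [_ hmax] := hUn T UT; apply: hmax.
  exact: (restr_proj pTS).
have [W [oW [S0 WS0] sW dW]] :=
  tame_many (fun r => @tame_Pr R m1 m2 m3 r) rn.+1 oB neB.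
have [k [krn Pk hk]] := @exists_max (fun r => restricts_to_unit S0 r) rn (restricts0 S0).
suff typ : typical_subrank R m1 m2 m3 k.
  by apply: leq_trans krn; apply: minm.
exists W; split => //; first by exists S0.
move=> S WS; split.
  have [b hb] := dW k krn.
  apply/Pr_spec; rewrite hb //; rewrite -(hb S0 WS0); exact/Pr_spec.
move=> r' hr'; have r'rn := HB S (sW S WS) r' hr'.
apply: hk => //; have [b hb] := dW r' r'rn.
apply/Pr_spec; rewrite hb //; rewrite -(hb S WS); exact/Pr_spec.
Qed.
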